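(* Let $0<p\le\infty$ and $0<q_1<q_2\le\infty$. Then $\ell^{p,q_1}\hookrightarrow\ell^{p,q_2}$, and for all $a\in\ell^{p,q_1}$: 1. $\|a\|_{p,q_2}\le (q_1/p)^{1/q_1-1/q_2}\|a\|_{p,q_1}$ if $p<q_1$; 2. $\|a\|_{p,q_2}\le\|a\|_{p,q_1}$ if $p\ge q_1$.
   Context: For a scalar sequence $a=(a_n)$, its decreasing rearrangement is $a^*_n=\inf\{\omega>0:\#\{k:|a_k|>\omega\}\le n-1\}$. For $p,q\in(0,\infty]$, the Lorentz sequence space $\ell^{p,q}$ consists of all sequences $a$ with $\|a\|_{p,q}<\infty$, where $\|a\|_{p,q}=\big(\sum_{n=1}^\infty (a_n^* )^q n^{q/p-1}\big)^{1/q}$ if $q<\infty$, and $\|a\|_{p,\infty}=\sup_{n}n^{1/p}a_n^*$; convention $1/\infty=0$. $X\hookrightarrow Y$ means $X\subset Y$ as a linear subspace and there is $C\ge0$ with $\|a\|_Y\le C\|a\|_X$ for all $a\in X$. *)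

(* Defs.v *)
From HB Require Import structures.
From mathcomp Require Import all_boot all_order all_algebra.
From mathcomp Require Import all_classical all_reals all_analysis.
Set Implicit Arguments. Unset Strict Implicit. Unset Printing Implicit Defensive.
Import Order.TTheory GRing.Theory Num.Theory.
Local Open Scope classical_set_scope.
Local Open Scope ring_scope.
Local Open Scope ereal_scope.

Section Lorentz.
Variable R : realType.

Definition einv (p : \bar R) : R :=
  match p with EFin x => x^-1 | _ => 0%R end.

(* #{k : |a_k| > w} <= m, i.e. that set is finite with at most m elements *)
Definition count_gt_le (a : nat -> R) (w : R) (m : nat) : Prop :=
  exists s : seq nat, (size s <= m)%N /\ forall k, (w < `|a k|)%R -> k \in s.

(* decreasing rearrangement a^*_n (for n >= 1; the paper's indexing):
   a^*_n = inf { w > 0 : #{k : |a_k| > w} <= n - 1 } *)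
Definition astar (a : nat -> R) (n : nat) : \bar R :=
  ereal_inf [set w%:E | w in [set w : R | (0 < w)%R /\ count_gt_le a w n.-1]].

Definition lnorm (p q : \bar R) (a : nat -> R) : \bar R :=
  match q with
  | EFin q' =>
      poweR (\sum_(1 <= n <oo)
               (poweR (astar a n) q' * ((n%:R : R) `^ (q' * einv p - 1))%:E))
            (q'^-1)
  | _ => ereal_sup [set ((n%:R : R) `^ (einv p))%:E * astar a n
                    | n in [set n : nat | (1 <= n)%N]]
  end.

Definition in_lorentz (p q : \bar R) (a : nat -> R) : Prop := lnorm p q a < +oo.

End Lorentz.

(* Main.v *)
Require Import Defs.
From HB Require Import structures.
From mathcomp Require Import all_boot all_order all_algebra.
From mathcomp Require Import all_classical all_reals all_analysis.
From mathcomp Require Import ring.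
Import Order.TTheory GRing.Theory Num.Theory.
Local Open Scope ring_scope.
Local Open Scope ereal_scope.
Section Aux.
Context {R : realType}.
Local Open Scope ring_scope.

Lemma mvt_step (x t : R) : 0 < x -> 1 <= t ->
  (x + 1) `^ t - x `^ t <= t * (x + 1) `^ (t - 1).
Proof.
move=> x0 t1.
have hd : forall y : R, 0 < y -> is_derive y 1 (fun z : R => z `^ t) (t * y `^ (t - 1)).
  by move=> y y0; exact: is_derive1_powR.
have hd' : forall y, y \in `]x, x + 1[ -> is_derive y 1 (fun z : R => z `^ t) (t * y `^ (t - 1)).
  move=> y; rewrite in_itv /= => /andP[xy _]; apply: hd; exact: lt_trans xy.
have xx1 : x < x + 1 by rewrite ltrDl.
have [|c] := MVT xx1 hd' _.
  apply: derivable_within_continuous => y; rewrite in_itv /= => /andP[xy _].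
  have y0 : 0 < y by apply: lt_le_trans x0 xy.
  by have [] := hd y y0.
rewrite in_itv /= => /andP[xc cx1] ->.
rewrite addrAC subrr add0r mulr1 ler_pM2l ?(lt_le_trans ltr01 t1)//.
apply: ge0_ler_powR; rewrite ?subr_ge0// ?nnegrE; last exact: ltW.
  exact: ltW (lt_trans x0 xc).
by rewrite addr_ge0// ltW.
Qed.
End Aux.
Section Aux2.
Context {R : realType}.
Local Open Scope ring_scope.

Lemma sum_pow_lb (t : R) n : 0 <= t -> (0 < n)%N ->
  n%:R `^ t <= Order.max 1 t * \sum_(1 <= k < n.+1) k%:R `^ (t - 1).
Proof.
move=> t0 n0.
have [t1|t1] := leP t 1.
  rewrite mul1r.
  have n0' : (0 : R) < n%:R by rewrite ltr0n.
  have -> : n%:R `^ t = \sum_(1 <= k < n.+1) (n%:R : R) `^ (t - 1).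
    rewrite sumr_const_nat subn1 /= .
    have e : t = (t - 1) + 1 by rewrite subrK.
    rewrite {1}e powRD; last by rewrite (gt_eqF n0') implybT.
    by rewrite powRr1 ?ltW// mulr_natr.
  rewrite big_nat_cond [leRHS]big_nat_cond; apply: ler_sum => k /andP[/andP[k1 kn] _].
  have k0 : (0 : R) < k%:R by rewrite ltr0n.
  have e : t - 1 = - (1 - t) by rewrite opprB.
  rewrite e !powRN lef_pV2 ?posrE ?powR_gt0//.
  apply: ge0_ler_powR.
  - by rewrite subr_ge0.
  - by rewrite nnegrE ltW.
  - by rewrite nnegrE ltW.
  - by rewrite ler_nat -ltnS.

elim: n n0 => [//|n IH] _.
case: n IH => [_|n IH].
  by rewrite big_nat1 !powR1 mulr1 ltW.
rewrite big_nat_recr //= mulrDr.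
apply: (le_trans _ (lerD (IH isT) (lexx _))).
rewrite -lerBlDl -[n.+2%:R]natr1.
apply: mvt_step; first by rewrite ltr0n.
exact: ltW.
Qed.
End Aux2.
Section Main.
Context {R : realType}.

Lemma lee_nneseriesN (u v : nat -> \bar R) N :
  (forall i, (N <= i)%N -> 0 <= u i) -> (forall i, (N <= i)%N -> u i <= v i) ->
  \sum_(N <= i <oo) u i <= \sum_(N <= i <oo) v i.
Proof.
move=> u0 uv; apply: lee_lim.
- by apply: is_cvg_ereal_nneg_natsum_cond => n Nn _; exact: u0.
- apply: is_cvg_ereal_nneg_natsum_cond => n Nn _.
  exact: le_trans (u0 _ Nn) (uv _ Nn).
- near=> n; rewrite big_nat_cond [X in _ <= X]big_nat_cond.
  by apply: lee_sum => i /andP[/andP[Ni _] _]; exact: uv.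
Unshelve. all: by end_near. Qed.

Lemma astar_ge0 (a : nat -> R) n : 0 <= astar a n.
Proof.
by apply: le_ereal_inf_tmp => _ [w [w0 _] <-]; rewrite lee_fin ltW.
Qed.

Lemma astar_anti (a : nat -> R) m n : (m <= n)%N -> astar a n <= astar a m.
Proof.
move=> mn; apply: ereal_inf_le_tmp => _ [w [w0 [s [hs hk]]] <-].
exists w => //; split => //; exists s; split => //.
by apply: leq_trans hs _; rewrite -!subn1 leq_sub2r.
Qed.

Lemma astar_le1 (a : nat -> R) n : astar a n <= astar a 1.
Proof. by case: n => [|n]; [exact: lexx | apply: astar_anti]. Qed.

End Main.
Section Main2.
Context {R : realType}.

Lemma lnorm_fin (p : \bar R) (r : R) (a b : nat -> R) :
  (forall n, astar a n = (b n)%:E) ->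
  lnorm p r%:E a =
  poweR (\sum_(1 <= n <oo) ((b n `^ r * n%:R `^ (r * einv p - 1))%R%:E)) r^-1.
Proof.
move=> hb; rewrite /lnorm; congr poweR; apply: eq_eseriesr => n _.
by rewrite hb EFinM.
Qed.

Lemma pow_ident (x y r q s : R) : (0 <= x)%R -> (0 < y)%R -> r != 0%R -> (r - q != 0)%R ->
  (x `^ r * y `^ (r * s - 1) =
   (y `^ s * x) `^ (r - q) * (x `^ q * y `^ (q * s - 1)))%R.
Proof.
move=> x0 y0 r0 rq0.
have [->|xp] := eqVneq x 0%R.
  by rewrite powR0 // mul0r mulr0 (powR0 rq0) mul0r.
have yn : y != 0%R by rewrite gt_eqF.
rewrite powRM ?powR_ge0 // -powRrM.
have h1 : (x `^ r = x `^ (r - q) * x `^ q)%R.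
  by rewrite -powRD ?xp ?implybT // subrK.
have h2 : (y `^ (r * s - 1) = y `^ (s * (r - q)) * y `^ (q * s - 1))%R.
  rewrite -powRD ?yn ?implybT //; congr powR; ring.
rewrite h1 h2; ring.
Qed.

End Main2.
Section Main3.
Context {R : realType}.

Lemma main_bound (p : \bar R) (q : R) (q2 : \bar R) (a : nat -> R) :
  0 < p -> (0 < q)%R -> q%:E < q2 -> in_lorentz p q%:E a ->
  lnorm p q%:E a \is a fin_num /\
  lnorm p q2 a <= ((Order.max 1 (q * einv p)) `^ (q^-1 - einv q2))%R%:E * lnorm p q%:E a.
Proof.
move=> hp hq hq2 hin.
have qn0 : (q^-1 != 0)%R by rewrite invr_neq0 // gt_eqF.
have s0 : (0 <= einv p)%R.
  by move: hp; case: (p) => [r|//|//] /=; rewrite lte_fin => r0; rewrite invr_ge0 ltW.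
set s := einv p.
set t := (q * s)%R.
set K := Order.max 1%R t.
have t0 : (0 <= t)%R by rewrite mulr_ge0 // ltW.
have K1 : (1 <= K)%R by rewrite le_max lexx.
have K0 : (0 <= K)%R by apply: le_trans K1.
have a1 : astar a 1 < +oo.
  rewrite ltey; apply/negP => /eqP h1.
  move: hin; rewrite /in_lorentz /lnorm.
  set S := (X in poweR X _).
  suff -> : S = +oo by rewrite poweRyr // ltxx.
  apply/eqP; rewrite eq_le leey /=.
  have := @nneseries_lim_ge R (fun n => poweR (astar a n) q * ((n%:R : R) `^ (q * einv p - 1))%:E) xpredT 1 2.
  rewrite big_nat1 h1 /= gt_eqF // powR1 mule1; apply.
  by move=> n _ _; rewrite mule_ge0 // ?poweR_ge0 // lee_fin powR_ge0.
set b := fun n => fine (astar a n).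
have hb : forall n, astar a n = (b n)%:E.
  move=> n; rewrite /b fineK // ge0_fin_numE ?astar_ge0 //.
  exact: le_lt_trans (astar_le1 a n) a1.
have b0 n : (0 <= b n)%R by rewrite /b fine_ge0 // astar_ge0.
have banti m n : (m <= n)%N -> (b n <= b m)%R.
  by move=> mn; have := @astar_anti _ a _ _ mn; rewrite !hb lee_fin.
set u := fun n => (b n `^ q * n%:R `^ (t - 1))%R.
have u0 n : (0 <= u n)%R by rewrite mulr_ge0 // powR_ge0.
set S := \sum_(1 <= n <oo) (u n)%:E.
have hl : lnorm p q%:E a = poweR S q^-1 by rewrite (lnorm_fin p q a b hb).
have S0 : 0 <= S by apply: nneseries_ge0 => n _ _; rewrite lee_fin.
have Sfin : S < +oo.
  by move: hin; rewrite /in_lorentz hl; apply: lty_poweRy.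
set Sr := fine S.
have hS : S = Sr%:E by rewrite /Sr fineK // ge0_fin_numE.
have Sr0 : (0 <= Sr)%R by rewrite -lee_fin -hS.
have hpart n : (\sum_(1 <= k < n.+1) u k <= Sr)%R.
  rewrite -lee_fin -hS -sumEFin; apply: nneseries_lim_ge => k _ _.
  by rewrite lee_fin.
have B1 n : (0 < n)%N -> (n%:R `^ t * b n `^ q <= K * Sr)%R.
  move=> n0.
  apply: (@le_trans _ _ (K * (\sum_(1 <= k < n.+1) k%:R `^ (t - 1)) * b n `^ q)%R).
    by apply: ler_wpM2r; [exact: powR_ge0 | exact: sum_pow_lb].
  rewrite -mulrA; apply: ler_wpM2l => //.
  apply: le_trans (hpart n); rewrite mulrC mulr_sumr.
  rewrite big_nat_cond [X in (_ <= X)%R]big_nat_cond.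
  apply: ler_sum => k /andP[/andP[k1 kn] _].
  rewrite /u; apply: ler_wpM2r; first exact: powR_ge0.
  apply: ge0_ler_powR; rewrite ?nnegrE //; first exact: ltW.
  by apply: banti; rewrite -ltnS.
set M := ((K * Sr) `^ q^-1)%R.
have B2 n : (0 < n)%N -> (n%:R `^ s * b n <= M)%R.
  move=> n0.
  have -> : (n%:R `^ s * b n = (n%:R `^ t * b n `^ q) `^ q^-1)%R.
    rewrite powRM ?powR_ge0 // -!powRrM mulfV ?gt_eqF // powRr1 //.
    by rewrite /t mulrAC mulfV ?gt_eqF // mul1r.
  apply: ge0_ler_powR; last exact: B1.
  - by rewrite invr_ge0 ltW.
  - by rewrite nnegrE mulr_ge0 // powR_ge0.
  - by rewrite nnegrE mulr_ge0.
have hlq : lnorm p q%:E a = (Sr `^ q^-1)%R%:E by rewrite hl hS.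
split; first by rewrite hlq.
rewrite hlq.
case: q2 hq2 => [r| |] //; last first.
  move=> _ /=; rewrite subr0 -EFinM -powRM //.
  apply: ge_ereal_sup => _ [n n1 <-]; rewrite hb -EFinM lee_fin.
  exact: B2.
rewrite lte_fin => qr.
have r0 : (0 < r)%R by apply: lt_trans qr.
set v := fun n => (b n `^ r * n%:R `^ (r * s - 1))%R.
rewrite (lnorm_fin p r a b hb) -/s.
set V := \sum_(1 <= n <oo) _.
have V0 : 0 <= V by apply: nneseries_ge0 => n _ _; rewrite lee_fin mulr_ge0 // powR_ge0.
have VS : V <= (M `^ (r - q))%R%:E * S.
  rewrite -nneseriesZl; last by move=> i _; rewrite lee_fin.
  apply: lee_nneseriesN => i i1; first by rewrite lee_fin mulr_ge0 // powR_ge0.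
  rewrite -EFinM lee_fin.
  rewrite (@pow_ident _ (b i) i%:R r q s) ?ltr0n ?gt_eqF ?subr_gt0 //.
  apply: ler_wpM2r; first exact: u0.
  apply: ge0_ler_powR; last exact: B2.
  - by rewrite subr_ge0 ltW.
  - by rewrite nnegrE mulr_ge0 // powR_ge0.
  - by rewrite nnegrE powR_ge0.
have Vfin : V \is a fin_num.
  by rewrite ge0_fin_numE // (le_lt_trans VS) // hS -EFinM ltry.
rewrite -(fineK Vfin) /=.
rewrite -EFinM lee_fin.
apply: (@le_trans _ _ ((M `^ (r - q) * Sr) `^ r^-1)%R).
  apply: ge0_ler_powR.
  - by rewrite invr_ge0 ltW.
  - by rewrite nnegrE fine_ge0.
  - by rewrite nnegrE mulr_ge0 // powR_ge0.
  - by rewrite -lee_fin fineK // EFinM -hS.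
rewrite powRM ?powR_ge0 // /M.
rewrite -!powRrM powRM // ?powR_ge0 ?mulr_ge0 //.
have e1 : (q^-1 * ((r - q) / r) = q^-1 - r^-1)%R.
  by field; rewrite !gt_eqF.
rewrite e1 -mulrA -powRD ?subrK //.
by apply/implyP; rewrite (negbTE qn0).
Qed.

End Main3.

Theorem mainTheorem7 (R : realType) (p : \bar R) (q1 : R) (q2 : \bar R)
  (hp : 0 < p) (hq1 : (0 < q1)%R) (hq12 : q1%:E < q2) :
  ((forall a : nat -> R, in_lorentz p q1%:E a -> in_lorentz p q2 a) /\
   (exists C : R, (0 <= C)%R /\
      forall a : nat -> R, in_lorentz p q1%:E a ->
        lnorm p q2 a <= C%:E * lnorm p q1%:E a)) /\
  (p < q1%:E -> forall a : nat -> R, in_lorentz p q1%:E a ->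
     lnorm p q2 a <= ((q1 / fine p) `^ (q1^-1 - einv q2))%:E * lnorm p q1%:E a) /\
  (q1%:E <= p -> forall a : nat -> R, in_lorentz p q1%:E a ->
     lnorm p q2 a <= lnorm p q1%:E a).
Proof.
have MB a h := main_bound p q1 q2 a hp hq1 hq12 h.
split; [split|split].
- move=> a h; have [fin le] := MB a h; rewrite /in_lorentz.
  by apply: (le_lt_trans le); rewrite -(fineK fin) -EFinM ltry.
- pose C := ((Order.max 1%R (q1 * einv p)) `^ (q1^-1 - einv q2))%R.
  exists C; split; first exact: powR_ge0.
  by move=> a h; have [_ le] := MB a h.
- move=> hlt a h; have [_ le] := MB a h; move: le.
  suff -> : (Order.max 1 (q1 * einv p) = q1 / fine p)%R by [].
  move: hp hlt; case: (p) => [x| |] //=; rewrite !lte_fin => x0 xq.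
  by apply: max_r; rewrite ler_pdivlMr // mul1r ltW.
- move=> hle a h; have [_ le] := MB a h; move: le.
  suff -> : (Order.max 1 (q1 * einv p) = 1)%R by rewrite powR1 mul1e.
  move: hp hle; case: (p) => [x| |] //=; rewrite ?lte_fin ?lee_fin => x0 xq.
    by apply: max_l; rewrite ler_pdivrMr // mul1r.
  by apply: max_l; rewrite mulr0.
Qed.
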